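(* Let $n\ge 1$ be odd. Consider the generalized $n$-gene repressilator system $$\dot r_i = a_i(p_{i-1}) - d_{r_i}(r_i),\qquad \dot p_i = k_i(r_i) - d_{p_i}(p_i),\qquad i=1,\dots,n,$$ (indices mod $n$, so $p_0=p_n$), where the functions satisfy the standing assumptions described in the context. Suppose that for every $i=1,\dots,n$, $$\delta_i^R > a_i(0)\quad\text{and}\quad \delta_i^P > k_i\big(d_{r_i}^{-1}(a_i(0))\big),$$ where $\delta_i^R:=\lim_{x\to\infty} d_{r_i}(x)$ and $\delta_i^P:=\lim_{x\to\infty} d_{p_i}(x)$ (these limits may be $+\infty$). Then the system has a unique steady state in $(0,\infty)^{2n}$.
   Context: Standing assumptions: each transcription-rate function $a_i:[0,\infty)\to\mathbb{R}$ is $C^1$, satisfies $a_i([0,\infty))\subset[0,\infty)$, is strictly decreasing on $[0,\infty)$, and has $a_i(0)>0$. Each degradation-rate function $d_{r_i}, d_{p_i}$ and each translation-rate function $k_i$ is a $C^1$ function $[0,\infty)\to\mathbb{R}$ that vanishes at $0$ and is strictly increasing on $(0,\infty)$; in particular these are invertible on their ranges. Here $r_i$ is the concentration of mRNA-$i$ and $p_i$ that of protein-$i$. *)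

(* Defs.v *)
From Stdlib Require Import Reals Lra Arith.
From Coquelicot Require Import Coquelicot.
Open Scope R_scope.

Definition C1_nonneg (f : R -> R) : Prop :=
  exists g : R -> R,
    (forall x, 0 < x -> is_derive f x (g x)) /\
    filterlim (fun h => (f h - f 0) / h) (at_right 0) (locally (g 0)) /\
    (forall x, 0 < x -> continuous g x) /\
    filterlim g (at_right 0) (locally (g 0)).

Definition transcription_fn (f : R -> R) : Prop :=
  C1_nonneg f /\
  (forall x, 0 <= x -> 0 <= f x) /\
  (forall x y, 0 <= x -> x < y -> f y < f x) /\
  0 < f 0.

Definition rate_fn (f : R -> R) : Prop :=
  C1_nonneg f /\
  f 0 = 0 /\
  (forall x y, 0 < x -> x < y -> f x < f y).

(* Index of the predecessor gene modulo n (0-based: genes 0..n-1, pred 0 = n-1). *)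
Definition prev (n i : nat) : nat := (i + n - 1) mod n.

Definition steady_state (n : nat) (a dr k dp : nat -> R -> R)
  (r p : nat -> R) : Prop :=
  forall i, (i < n)%nat ->
    a i (p (prev n i)) - dr i (r i) = 0 /\ k i (r i) - dp i (p i) = 0.

Definition positive_state (n : nat) (r p : nat -> R) : Prop :=
  forall i, (i < n)%nat -> 0 < r i /\ 0 < p i.

(* Main.v *)
Require Import Defs.
From Stdlib Require Import Reals Arith Lra Lia Classical ClassicalEpsilon.
From Coquelicot Require Import Coquelicot.
Open Scope R_scope.

Definition cont_on (f : R -> R) : Prop :=
  forall x, 0 <= x -> forall eps, 0 < eps -> exists delta, 0 < delta /\
    forall y, 0 <= y -> Rabs (y - x) < delta -> Rabs (f y - f x) < eps.

Lemma ballR (x : R) (e : R) (y : R) : ball x e y <-> Rabs (y - x) < e.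
Proof. split; intro H; exact H. Qed.

Lemma C1_cont f : C1_nonneg f -> cont_on f.
Proof.
  intros [g [Hd [H0 _]]] x Hx eps Heps.
  destruct (Rle_lt_or_eq_dec 0 x Hx) as [Hxp | Hx0].
  - pose proof (ex_derive_continuous (K:=R_AbsRing) (V:=R_NormedModule) f x (ex_intro _ (g x) (Hd x Hxp))) as Hc.
    destruct (Hc (ball (f x) eps)) as [d Hdl].
    { exists (mkposreal _ Heps). auto. }
    exists d. split. apply cond_pos. intros y _ Hy.
    apply ballR. apply Hdl. apply ballR. auto.
  - subst x.
    destruct (H0 (ball (g 0) 1)) as [d Hdl].
    { exists (mkposreal 1 Rlt_0_1). auto. }
    set (m := eps / (Rabs (g 0) + 1)).
    assert (Hm : 0 < m). { unfold m. apply Rdiv_lt_0_compat; auto. pose proof (Rabs_pos (g 0)); lra. }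
    exists (Rmin d m). split. { apply Rmin_pos; auto. apply cond_pos. }
    intros y Hy Hyd.
    destruct (Rle_lt_or_eq_dec 0 y Hy) as [Hyp | Hy0].
    + assert (Hq := Hdl y). 
      assert (Hyd' : Rabs (y - 0) < d). { eapply Rlt_le_trans. apply Hyd. apply Rmin_l. }
      specialize (Hq (proj2 (ballR _ _ _) Hyd') Hyp). apply (proj1 (ballR _ _ _)) in Hq.
      assert (Hym : y < m). { rewrite Rminus_0_r in Hyd. rewrite (Rabs_right y) in Hyd by lra. eapply Rlt_le_trans. apply Hyd. apply Rmin_r. }
      assert (E : f y - f 0 = y * ((f y - f 0) / y)). { field. lra. }
      rewrite E, Rabs_mult, (Rabs_right y) by lra.
      assert (Hb : Rabs ((f y - f 0) / y) < Rabs (g 0) + 1).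
      { pose proof (Rabs_triang_inv ((f y - f 0) / y) (g 0)). lra. }
      apply Rle_lt_trans with (m * Rabs ((f y - f 0) / y)).
      { apply Rmult_le_compat_r. apply Rabs_pos. lra. }
      apply Rlt_le_trans with (m * (Rabs (g 0) + 1)).
      { apply Rmult_lt_compat_l; auto. }
      unfold m. right. field. pose proof (Rabs_pos (g 0)); lra.
    + subst y. rewrite Rminus_diag, Rabs_R0. auto.
Qed.

Definition sinc (h : R -> R) : Prop := forall x y, 0 <= x -> x < y -> h x < h y.

Lemma rate_pos h : rate_fn h -> forall y, 0 < y -> 0 < h y.
Proof.
  intros [HC [H0 Hi]] y Hy.
  assert (Hc := C1_cont h HC).
  assert (Hh : 0 <= h (y/2)).
  { destruct (Rle_or_lt 0 (h (y/2))) as [Hl|Hl]; auto.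
    destruct (Hc 0 (Rle_refl 0) (- h (y/2))) as [d [Hd Hdd]]; [lra|].
    set (t := Rmin (d/2) (y/4)).
    assert (Ht0 : 0 < t). { unfold t. apply Rmin_pos; lra. }
    assert (Ht1 : t <= d/2) by apply Rmin_l.
    assert (Ht2 : t <= y/4) by apply Rmin_r.
    specialize (Hdd t ltac:(lra)). rewrite H0, Rminus_0_r, Rminus_0_r in Hdd.
    rewrite Rabs_right in Hdd by lra. specialize (Hdd ltac:(lra)).
    assert (h t < h (y/2)) by (apply Hi; lra).
    destruct (Rle_or_lt 0 (h t)).
    - lra.
    - rewrite Rabs_left in Hdd; lra. }
  assert (h (y/2) < h y) by (apply Hi; lra). lra.
Qed.

Lemma rate_sinc h : rate_fn h -> sinc h.
Proof.
  intros Hr x y Hx Hxy. destruct (Rle_lt_or_eq_dec 0 x Hx) as [Hx'|Hx'].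
  - destruct Hr as [_ [_ Hi]]. apply Hi; auto.
  - subst x. destruct Hr as [a [H0 b]]. rewrite H0. apply rate_pos; auto. split; auto.
Qed.

Lemma sinc_le_inv h x y : sinc h -> 0 <= x -> 0 <= y -> h x <= h y -> x <= y.
Proof.
  intros Hs Hx Hy Hl. destruct (Rle_or_lt x y) as [|H]; auto.
  specialize (Hs y x Hy H). lra.
Qed.

Lemma sinc_lt_inv h x y : sinc h -> 0 <= x -> 0 <= y -> h x < h y -> x < y.
Proof.
  intros Hs Hx Hy Hl. destruct (Rlt_or_le x y) as [|H]; auto.
  destruct (Rle_lt_or_eq_dec _ _ H) as [H'|H'].
  - specialize (Hs y x Hy H'). lra.
  - subst; lra.
Qed.

Lemma sinc_le h x y : sinc h -> 0 <= x -> x <= y -> h x <= h y.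
Proof.
  intros Hs Hx Hxy. destruct (Rle_lt_or_eq_dec _ _ Hxy) as [H|H].
  - left; apply Hs; auto.
  - subst; lra.
Qed.

Lemma sinc_inj h x y : sinc h -> 0 <= x -> 0 <= y -> h x = h y -> x = y.
Proof.
  intros Hs Hx Hy E. apply Rle_antisym; eapply sinc_le_inv; eauto; lra.
Qed.

Lemma Rmax_lip x y : Rabs (Rmax 0 y - Rmax 0 x) <= Rabs (y - x).
Proof.
  unfold Rmax; destruct (Rle_dec 0 y); destruct (Rle_dec 0 x);
  unfold Rabs; repeat destruct Rcase_abs; lra.
Qed.

Lemma ext_cont h t : cont_on h -> continuity (fun x => h (Rmax 0 x) - t).
Proof.
  intros Hc x eps Heps.
  assert (Hm : 0 <= Rmax 0 x) by apply Rmax_l.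
  destruct (Hc _ Hm eps Heps) as [d [Hd Hdd]].
  exists d. split; auto. intros y [_ Hy]. unfold R_dist in *. simpl in *. unfold R_dist in *.
  replace (h (Rmax 0 y) - t - (h (Rmax 0 x) - t)) with (h (Rmax 0 y) - h (Rmax 0 x)) by ring.
  apply Hdd. apply Rmax_l. eapply Rle_lt_trans. apply Rmax_lip. auto.
Qed.

Lemma lim_above h L t : is_lim h p_infty L -> Rbar_lt (Finite t) L ->
  exists M, 0 <= M /\ t < h M.
Proof.
  intros Hl Hlt. destruct L as [l| |]; simpl in Hlt.
  - assert (Hp : 0 < l - t) by lra.
    destruct (Hl (ball l (l - t))) as [M HM].
    { exists (mkposreal _ Hp). auto. }
    exists (Rmax M 0 + 1). split. { pose proof (Rmax_r M 0); lra. }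
    specialize (HM (Rmax M 0 + 1) ltac:(pose proof (Rmax_l M 0); lra)).
    apply (proj1 (ballR _ _ _)) in HM. 
    destruct (Rle_or_lt t (h (Rmax M 0 + 1))) as [H|H].
    + destruct (Rle_lt_or_eq_dec _ _ H); auto. rewrite <- e in HM.
      rewrite Rabs_left1 in HM; lra.
    + rewrite Rabs_left in HM; lra.
  - destruct (Hl (fun y => t < y)) as [M HM].
    { exists t. auto. }
    exists (Rmax M 0 + 1). split. { pose proof (Rmax_r M 0); lra. }
    apply HM. pose proof (Rmax_l M 0); lra.
  - contradiction.
Qed.

Lemma inv_exist h L t : cont_on h -> h 0 = 0 -> is_lim h p_infty L -> 0 <= t ->
  Rbar_lt (Finite t) L -> exists y, 0 <= y /\ h y = t.
Proof.
  intros Hc H0 Hl Ht Hlt.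
  destruct (lim_above h L t Hl Hlt) as [M [HM HhM]].
  destruct (IVT_cor (fun x => h (Rmax 0 x) - t) 0 M (ext_cont h t Hc) HM) as [z [Hz Hfz]].
  - rewrite (Rmax_left 0 0) by lra. rewrite (Rmax_right 0 M) by lra. rewrite H0.
    assert (0 <= t * (h M - t)) by (apply Rmult_le_pos; lra). nra.
  - exists z. rewrite (Rmax_right 0 z) in Hfz by lra. split; lra.
Qed.

Lemma inv_cont h phi psi : sinc h -> cont_on phi ->
  (forall x, 0 <= x -> 0 <= psi x /\ h (psi x) = phi x) -> cont_on psi.
Proof.
  intros Hs Hc Hpsi x Hx eps Heps.
  destruct (Hpsi x Hx) as [Hy0 Ehx]. set (y0 := psi x) in *.
  assert (Hu : h y0 < h (y0 + eps/2)) by (apply Hs; lra).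
  destruct (Hc x Hx (h (y0 + eps/2) - h y0)) as [d1 [Hd1 H1]]; [lra|].
  destruct (Rle_or_lt 0 (y0 - eps/2)) as [Hl|Hl].
  - assert (Hu' : h (y0 - eps/2) < h y0) by (apply Hs; lra).
    destruct (Hc x Hx (h y0 - h (y0 - eps/2))) as [d2 [Hd2 H2]]; [lra|].
    exists (Rmin d1 d2). split. apply Rmin_pos; auto.
    intros y Hy Hyx.
    assert (A1 : Rabs (y - x) < d1) by (eapply Rlt_le_trans; [apply Hyx| apply Rmin_l]).
    assert (A2 : Rabs (y - x) < d2) by (eapply Rlt_le_trans; [apply Hyx| apply Rmin_r]).
    specialize (H1 y Hy A1). specialize (H2 y Hy A2).
    destruct (Hpsi y Hy) as [Hpy Ehy]. rewrite <- Ehy, <- Ehx in H1, H2.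
    fold y0 in H1, H2.
    assert (B1 : h (psi y) < h (y0 + eps/2)).
    { destruct (Rle_or_lt 0 (h (psi y) - h y0)).
      - rewrite Rabs_right in H1; lra.
      - lra. }
    assert (B2 : h (y0 - eps/2) < h (psi y)).
    { destruct (Rle_or_lt 0 (h (psi y) - h y0)).
      - lra.
      - rewrite Rabs_left in H2; lra. }
    apply sinc_lt_inv in B1; auto; try lra.
    apply sinc_lt_inv in B2; auto; try lra.
    unfold Rabs; destruct Rcase_abs; lra.
  - exists d1. split; auto. intros y Hy Hyx.
    specialize (H1 y Hy Hyx).
    destruct (Hpsi y Hy) as [Hpy Ehy]. rewrite <- Ehy, <- Ehx in H1. fold y0 in H1.
    assert (B1 : h (psi y) < h (y0 + eps/2)).
    { destruct (Rle_or_lt 0 (h (psi y) - h y0)).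
      - rewrite Rabs_right in H1; lra.
      - lra. }
    apply sinc_lt_inv in B1; auto; try lra.
    unfold Rabs; destruct Rcase_abs; lra.
Qed.

Lemma fchoice (P : R -> R -> Prop) : (forall x, exists y, P x y) -> exists f, forall x, P x (f x).
Proof.
  intros H. exists (fun x => proj1_sig (constructive_indefinite_description _ (H x))).
  intro x. exact (proj2_sig (constructive_indefinite_description _ (H x))).
Qed.

Lemma cont_comp f g : cont_on f -> cont_on g -> (forall x, 0 <= x -> 0 <= g x) ->
  cont_on (fun x => f (g x)).
Proof.
  intros Hf Hg Hpos x Hx eps Heps.
  destruct (Hf (g x) (Hpos x Hx) eps Heps) as [d1 [Hd1 H1]].
  destruct (Hg x Hx d1 Hd1) as [d2 [Hd2 H2]].
  exists d2. split; [auto|]. intros y Hy Hyx. apply H1; auto.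
Qed.

Lemma gene a dr k dp dR dP :
  transcription_fn a -> rate_fn dr -> rate_fn k -> rate_fn dp ->
  is_lim dr p_infty dR -> is_lim dp p_infty dP ->
  Rbar_lt (Finite (a 0)) dR ->
  (forall x, 0 <= x -> dr x = a 0 -> Rbar_lt (Finite (k x)) dP) ->
  exists F : R -> R,
    (forall x, 0 <= x -> 0 < F x) /\ cont_on F /\
    (forall x y, 0 <= x -> x < y -> F y < F x) /\
    (forall x r p, 0 <= x -> 0 <= r -> 0 <= p -> a x = dr r -> k r = dp p -> p = F x) /\
    (forall x, 0 <= x -> exists r, 0 < r /\ a x = dr r /\ k r = dp (F x)).
Proof.
  intros Ha Hdr Hk Hdp HlR HlP HR HP.
  assert (Ca : cont_on a) by (apply C1_cont, Ha).
  assert (Cdr : cont_on dr) by (apply C1_cont, Hdr).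
  assert (Ck : cont_on k) by (apply C1_cont, Hk).
  assert (Cdp : cont_on dp) by (apply C1_cont, Hdp).
  assert (Sdr := rate_sinc _ Hdr). assert (Sk := rate_sinc _ Hk). assert (Sdp := rate_sinc _ Hdp).
  destruct Ha as [_ [Ha0 [Hadec Ha00]]].
  assert (Hapos : forall x, 0 <= x -> 0 < a x).
  { intros x Hx. assert (a (x+1) < a x) by (apply Hadec; lra). specialize (Ha0 (x+1) ltac:(lra)). lra. }
  assert (Hale : forall x, 0 <= x -> a x <= a 0).
  { intros x Hx. destruct (Rle_lt_or_eq_dec _ _ Hx) as [H|H]. left; apply Hadec; lra. subst; lra. }
  destruct Hdr as [_ [dr0 _]]. destruct Hk as [_ [k0 _]]. destruct Hdp as [_ [dp0 _]].
  destruct (fchoice (fun x y => 0 <= x -> 0 <= y /\ dr y = a x)) as [Rf HRf].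
  { intro x. destruct (Rle_or_lt 0 x) as [Hx|Hx].
    - destruct (inv_exist dr dR (a x) Cdr dr0 HlR) as [y Hy].
      + left; auto.
      + eapply Rbar_le_lt_trans; [|apply HR]. simpl. auto.
      + exists y. auto.
    - exists 0. intro; lra. }
  assert (CRf : cont_on Rf) by (apply (inv_cont dr a Rf Sdr Ca); intros; apply HRf; auto).
  assert (HRpos : forall x, 0 <= x -> 0 < Rf x).
  { intros x Hx. destruct (HRf x Hx) as [H1 H2]. destruct (Rle_lt_or_eq_dec _ _ H1); auto.
    rewrite <- e, dr0 in H2. specialize (Hapos x Hx). lra. }
  assert (HRle : forall x, 0 <= x -> Rf x <= Rf 0).
  { intros x Hx. apply (sinc_le_inv dr); try apply HRf; try lra; auto.
    rewrite (proj2 (HRf x Hx)), (proj2 (HRf 0 (Rle_refl 0))). auto. }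
  assert (HkP : Rbar_lt (Finite (k (Rf 0))) dP).
  { apply HP. apply HRf; lra. apply HRf; lra. }
  destruct (fchoice (fun x y => 0 <= x -> 0 <= y /\ dp y = k (Rf x))) as [Ff HFf].
  { intro x. destruct (Rle_or_lt 0 x) as [Hx|Hx].
    - destruct (inv_exist dp dP (k (Rf x)) Cdp dp0 HlP) as [y Hy].
      + rewrite <- k0. apply sinc_le; auto. lra. left. apply HRpos; auto.
      + eapply Rbar_le_lt_trans; [|apply HkP]. simpl. apply sinc_le; auto. left; apply HRpos; auto.
      + exists y. auto.
    - exists 0. intro; lra. }
  assert (CFf : cont_on Ff).
  { apply (inv_cont dp (fun x => k (Rf x)) Ff Sdp).
    - apply cont_comp; auto. intros; left; apply HRpos; auto.
    - intros; apply HFf; auto. }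
  exists Ff. split; [|split; [auto|split; [|split]]].
  - intros x Hx. destruct (HFf x Hx) as [H1 H2]. destruct (Rle_lt_or_eq_dec _ _ H1); auto.
    rewrite <- e, dp0 in H2. assert (0 < k (Rf x)).
    { rewrite <- k0. apply Sk. lra. apply HRpos; auto. } lra.
  - intros x y Hx Hxy.
    assert (a y < a x) by (apply Hadec; auto).
    assert (Rf y < Rf x).
    { apply (sinc_lt_inv dr); auto. left; apply HRpos; lra. left; apply HRpos; lra.
      rewrite (proj2 (HRf x Hx)), (proj2 (HRf y ltac:(lra))). auto. }
    assert (k (Rf y) < k (Rf x)) by (apply Sk; auto; left; apply HRpos; lra).
    apply (sinc_lt_inv dp); auto. apply HFf; lra. apply HFf; lra.
    rewrite (proj2 (HFf x Hx)), (proj2 (HFf y ltac:(lra))). auto.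
  - intros x r p Hx Hr Hp E1 E2.
    assert (r = Rf x).
    { apply (sinc_inj dr); auto. apply HRf; auto. rewrite (proj2 (HRf x Hx)). auto. }
    subst r. apply (sinc_inj dp); auto. apply HFf; auto. rewrite (proj2 (HFf x Hx)). auto.
  - intros x Hx. exists (Rf x). split. apply HRpos; auto. split.
    symmetry; apply HRf; auto. symmetry; apply HFf; auto.
Qed.

Lemma gchoice {A B : Type} (P : A -> B -> Prop) : (forall x, exists y, P x y) -> exists f, forall x, P x (f x).
Proof.
  intros H. exists (fun x => proj1_sig (constructive_indefinite_description _ (H x))).
  intro x. exact (proj2_sig (constructive_indefinite_description _ (H x))).
Qed.

Fixpoint chain (F : nat -> R -> R) (m : nat) (x : R) : R :=
  match m with 0%nat => x | S m' => F m' (chain F m' x) end.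

Section Chain.
Variables (n : nat) (F : nat -> R -> R).
Hypothesis HFpos : forall i x, (i < n)%nat -> 0 <= x -> 0 < F i x.
Hypothesis HFc : forall i, (i < n)%nat -> cont_on (F i).
Hypothesis HFd : forall i x y, (i < n)%nat -> 0 <= x -> x < y -> F i y < F i x.

Lemma chain_pos m x : (m <= n)%nat -> 0 <= x -> 0 <= chain F m x.
Proof.
  induction m; intros Hm Hx; simpl; auto. left. apply HFpos; [lia|]. apply IHm; auto; lia.
Qed.

Lemma chain_cont m : (m <= n)%nat -> cont_on (chain F m).
Proof.
  induction m; intros Hm; simpl.
  - intros x Hx eps Heps. exists eps. split; auto.
  - apply (cont_comp (F m) (chain F m)). apply HFc; lia. apply IHm; lia.
    intros; apply chain_pos; auto; lia.
Qed.

Lemma chain_mono m x y : (m <= n)%nat -> 0 <= x -> x < y ->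
  (Nat.even m = true -> chain F m x < chain F m y) /\
  (Nat.even m = false -> chain F m y < chain F m x).
Proof.
  induction m; intros Hm Hx Hxy; cbn [chain].
  - split; intro H; [auto | discriminate].
  - destruct IHm as [I1 I2]; try lia; auto.
    rewrite Nat.even_succ, <- Nat.negb_even.
    assert (P1 : 0 <= chain F m x) by (apply chain_pos; try lia; lra).
    assert (P2 : 0 <= chain F m y) by (apply chain_pos; try lia; lra).
    destruct (Nat.even m); simpl; split; intro H; try discriminate.
    + apply HFd; auto; lia.
    + apply HFd; auto; lia.
Qed.
End Chain.

Lemma prev_0 n : (1 <= n)%nat -> prev n 0 = (n - 1)%nat.
Proof. intros. unfold prev. symmetry. apply (Nat.mod_unique _ _ 0); lia. Qed.

Lemma prev_S n i : (1 <= i)%nat -> (i < n)%nat -> prev n i = (i - 1)%nat.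
Proof. intros. unfold prev. symmetry. apply (Nat.mod_unique _ _ 1); lia. Qed.

Lemma prev_lt n i : (1 <= n)%nat -> (prev n i < n)%nat.
Proof. intros. unfold prev. apply Nat.mod_upper_bound. lia. Qed.

Theorem proposition1
  (n : nat) (Hn1 : (1 <= n)%nat) (Hodd : Nat.odd n = true)
  (a dr k dp : nat -> R -> R)
  (deltaR deltaP : nat -> Rbar)
  (Ha : forall i, (i < n)%nat -> transcription_fn (a i))
  (Hdr : forall i, (i < n)%nat -> rate_fn (dr i))
  (Hk : forall i, (i < n)%nat -> rate_fn (k i))
  (Hdp : forall i, (i < n)%nat -> rate_fn (dp i))
  (HlimR : forall i, (i < n)%nat -> is_lim (dr i) p_infty (deltaR i))
  (HlimP : forall i, (i < n)%nat -> is_lim (dp i) p_infty (deltaP i))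
  (HR : forall i, (i < n)%nat -> Rbar_lt (Finite (a i 0)) (deltaR i))
  (HP : forall i, (i < n)%nat -> forall x, 0 <= x -> dr i x = a i 0 ->
          Rbar_lt (Finite (k i x)) (deltaP i)) :
  exists r p : nat -> R,
    positive_state n r p /\ steady_state n a dr k dp r p /\
    forall r' p' : nat -> R,
      positive_state n r' p' -> steady_state n a dr k dp r' p' ->
      forall i, (i < n)%nat -> r' i = r i /\ p' i = p i.
Proof.
  destruct (gchoice (fun i (F : R -> R) => (i < n)%nat ->
    (forall x, 0 <= x -> 0 < F x) /\ cont_on F /\
    (forall x y, 0 <= x -> x < y -> F y < F x) /\
    (forall x r p, 0 <= x -> 0 <= r -> 0 <= p -> a i x = dr i r -> k i r = dp i p -> p = F x) /\
    (forall x, 0 <= x -> exists r, 0 < r /\ a i x = dr i r /\ k i r = dp i (F x))))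
    as [F HF].
  { intro i. destruct (lt_dec i n) as [Hi|Hi].
    - destruct (gene (a i) (dr i) (k i) (dp i) (deltaR i) (deltaP i)) as [F HF]; auto.
      exists F. auto.
    - exists (fun x => x). intro; lia. }
  assert (HFpos : forall i x, (i < n)%nat -> 0 <= x -> 0 < F i x) by (intros; apply HF; auto).
  assert (HFc : forall i, (i < n)%nat -> cont_on (F i)) by (intros; apply HF; auto).
  assert (HFd : forall i x y, (i < n)%nat -> 0 <= x -> x < y -> F i y < F i x) by (intros; apply HF; auto).
  assert (Hev : Nat.even n = false).
  { unfold Nat.odd in Hodd. destruct (Nat.even n); auto. }
  assert (Hdec : forall x y, 0 <= x -> x < y -> chain F n y < chain F n x).
  { intros x y Hx Hxy. apply (chain_mono n F HFpos HFd n x y); auto. }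
  assert (Hpos : forall x, 0 <= x -> 0 < chain F n x).
  { intros x Hx. destruct n as [|n']; [lia|]. cbn [chain]. apply HFpos; [lia|].
    apply (chain_pos (S n') F HFpos); auto. }
  set (b := chain F n 0).
  assert (Hb : 0 < b) by (apply Hpos; lra).
  assert (Hbb : chain F n b < b) by (apply Hdec; lra).
  assert (Hcont : continuity (fun x => (chain F n (Rmax 0 x) - 0) - id x)).
  { apply (continuity_minus (fun x => chain F n (Rmax 0 x) - 0) id).
    apply ext_cont. apply (chain_cont n F HFpos HFc n); auto. apply derivable_continuous, derivable_id. }
  destruct (IVT_cor _ 0 b Hcont) as [z [Hz Hfz]]; [lra| |].
  { unfold id. rewrite (Rmax_left 0 0), (Rmax_right 0 b) by lra. fold b.
    assert (0 <= b * -(chain F n b - b)) by (apply Rmult_le_pos; lra). nra. }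
  unfold id in Hfz. rewrite (Rmax_right 0 z) in Hfz by lra.
  assert (Hfix : chain F n z = z) by lra.
  assert (Huniq : forall y, 0 <= y -> chain F n y = y -> y = z).
  { intros y Hy Ey. destruct (Rtotal_order y z) as [H|[H|H]]; auto.
    - specialize (Hdec y z Hy H). lra.
    - specialize (Hdec z y ltac:(lra) H). lra. }
  set (p := fun i => chain F (S i) z).
  assert (Hpp : forall i, (i < n)%nat -> 0 < p i).
  { intros i Hi. unfold p. cbn [chain]. apply HFpos; auto. apply (chain_pos n F HFpos); try lia; lra. }
  assert (Hpprev : forall i, (i < n)%nat -> p i = F i (p (prev n i))).
  { intros i Hi. assert (E : chain F i z = p (prev n i)).
    { destruct i as [|i].
      - rewrite prev_0 by auto. unfold p. replace (S (n-1)) with n by lia.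
        change (chain F 0 z) with z. symmetry; auto.
      - rewrite prev_S by lia. unfold p. f_equal. lia. }
    rewrite <- E. reflexivity. }
  destruct (gchoice (fun i r => (i < n)%nat ->
     0 < r /\ a i (p (prev n i)) = dr i r /\ k i r = dp i (p i))) as [r Hr].
  { intro i. destruct (lt_dec i n) as [Hi|Hi].
    - destruct (HF i Hi) as [_ [_ [_ [_ H5]]]].
      destruct (H5 (p (prev n i))) as [r Hr].
      + left. apply Hpp. apply prev_lt; auto.
      + exists r. rewrite (Hpprev i Hi). auto.
    - exists 0. intro; lia. }
  exists r, p. split; [|split].
  - intros i Hi. split; [apply Hr|apply Hpp]; auto.
  - intros i Hi. destruct (Hr i Hi) as [_ [E1 E2]]. split; lra.
  - intros r' p' Hpos' Hst' i Hi.
    assert (Hp'F : forall i, (i < n)%nat -> p' i = F i (p' (prev n i))).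
    { intros j Hj. destruct (HF j Hj) as [_ [_ [_ [H4 _]]]].
      destruct (Hst' j Hj) as [E1 E2].
      assert (Hpj : (prev n j < n)%nat) by (apply prev_lt; auto).
      apply (H4 _ (r' j)).
      - left; apply Hpos'; auto.
      - left; apply Hpos'; auto.
      - left; apply Hpos'; auto.
      - lra.
      - lra. }
    assert (Hch : forall j, (j < n)%nat -> p' j = chain F (S j) (p' (n - 1)%nat)).
    { induction j; intros Hj.
      - rewrite Hp'F, prev_0 by auto. reflexivity.
      - rewrite Hp'F, prev_S by lia. replace (S j - 1)%nat with j by lia.
        rewrite IHj by lia. reflexivity. }
    assert (Ez : p' (n - 1)%nat = z).
    { apply Huniq. left; apply Hpos'; lia.
      replace n with (S (n - 1)) at 1 by lia. symmetry. apply Hch. lia. }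
    assert (Ep : p' i = p i) by (rewrite Hch, Ez by auto; reflexivity).
    split; auto.
    destruct (Hst' i Hi) as [E1 _]. destruct (Hr i Hi) as [Hri [E2 _]].
    assert (Hpi : (prev n i < n)%nat) by (apply prev_lt; auto).
    apply (sinc_inj (dr i)). apply rate_sinc; auto.
    left; apply Hpos'; auto. lra.
    rewrite (Hch (prev n i) Hpi), Ez in E1. fold (p (prev n i)) in E1. lra.
Qed.
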